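(* Let $e\ge4$, let $I\subseteq\mathbb Z$ be a union of $c$ congruence classes modulo $e$ with $2\le c\le e-2$, put $\bar c=e-c$, and let $\lambda$ be an $I$-separated partition. Then: (1) $\lambda$ is $(e,\bar c)$-regular if and only if $\lambda_{\bar I}$ is $\bar c$-restricted; (2) if $\lambda_I$ is $c$-regular, then $\lambda$ is $(e,y)$-regular for every $y\in(\bar c,\bar c+1)\cap\mathbb Q$; (3) if $y\in[\bar c+1,e-1]\cap\mathbb Q$, then $\lambda$ is $(e,y)$-regular if and only if $\lambda_I$ is $(c,y-\bar c)$-regular; (4) $\lambda$ is $e$-restricted if and only if $\lambda_I$ is $c$-restricted.
   Context: $\bar I=\mathbb Z\setminus I$. Fix a large integer $n$ divisible by $e$. The $n$-bead abacus display of $\lambda$ (with $e$ runners) is the set of positions $\{\lambda_r+r-1: 1\le r\le n\}\subseteq\mathbb Z_{\ge0}$ (occupied positions); a set of $N$ occupied positions $b_1>\dots>b_N$ determines the partition with parts $b_r+r-N$. Discarding all positions not in $I$ and relabelling the remaining positions $0,1,2,\dots$ in increasing order gives an abacus display (on $c$ runners) of a partition $\lambda_I$; discarding the positions in $I$ similarly gives $\lambda_{\bar I}$. $\lambda$ is $I$-separated if, in its display, the first empty position lying in $I$ comes after the last occupied position lying in $\bar I$. A partition is $k$-regular if no $k$ equal positive parts, $k$-restricted if $\lambda_r-\lambda_{r+1}<k$ for all $r$. For integers $1\le y'<e'$, a partition is $(e',y')$-regular if it has no hook of length $e't$ and arm length $y't-1$ for any $t\ge1$ (hook at $(r,c)$: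 length $\lambda_r-c+\lambda'_c-r+1$, arm length $\lambda_r-c$); for rational $y$ with denominator $z$, $(e,y)$-regular means $(ez,yz)$-regular, and $(c,y')$-regular for rational $y'$ with denominator $z'$ means $(cz',y'z')$-regular. *)

(* Defs.v *)
From mathcomp Require Import all_boot all_order all_algebra.
Set Implicit Arguments. Unset Strict Implicit. Unset Printing Implicit Defensive.

(* Partitions: finite weakly decreasing sequences of positive naturals.
   lambda_{r+1} = nth 0 l r  (0-based index r). *)
Definition is_partition (l : seq nat) : bool :=
  sorted (fun x y => y <= x) l && all (fun x => 0 < x) l.

(* I = union of the congruence classes mod e whose residues lie in S. *)
Definition inI (e : nat) (S : {set 'I_e}) (p : nat) : bool :=
  [exists s in S, (s : nat) == p %% e].

(* n-bead abacus display: positions lambda_r - r + n, 1 <= r <= n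
   (0-based: nth 0 l r + (n - r.+1)). *)
Definition abacus (n : nat) (l : seq nat) : seq nat :=
  [seq nth 0 l r + (n - r.+1) | r <- iota 0 n].

Definition occupied (n : nat) (l : seq nat) (p : nat) : bool := p \in abacus n l.

Definition relabel (P : pred nat) (p : nat) : nat := count P (iota 0 p).

(* the partition determined by a set of occupied positions b_1 > ... > b_N:
   parts b_r + r - N (zero parts dropped) *)
Definition partition_of_beads (bs : seq nat) : seq nat :=
  let b := sort (fun x y => y <= x) bs in
  let N := size b in
  [seq x <- [seq nth 0 b r + r.+1 - N | r <- iota 0 N] | 0 < x].

Definition sub_partition (P : pred nat) (n : nat) (l : seq nat) : seq nat :=
  partition_of_beads [seq relabel P p | p <- abacus n l & P p].

Definition lamI e (S : {set 'I_e}) n l := sub_partition (inI S) n l.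
Definition lamIbar e (S : {set 'I_e}) n l :=
  sub_partition (fun p => ~~ inI S p) n l.

Definition I_separated e (S : {set 'I_e}) n l : Prop :=
  forall p q, inI S p -> ~~ occupied n l p -> ~~ inI S q -> occupied n l q -> q < p.

Definition k_regular (k : nat) (l : seq nat) : Prop :=
  forall x, 0 < x -> count (pred1 x) l < k.

Definition k_restricted (k : nat) (l : seq nat) : Prop :=
  forall r, nth 0 l r - nth 0 l r.+1 < k.

Definition conj_part (l : seq nat) (c : nat) : nat := count (fun x => c <= x) l.

(* hook at (r+1, c) (row r 0-based), 1 <= c <= lambda_{r+1} *)
Definition hook_len (l : seq nat) (r c : nat) : nat :=
  nth 0 l r - c + (conj_part l c - r).
Definition arm_len (l : seq nat) (r c : nat) : nat := nth 0 l r - c.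

Definition ey_regular_nat (e' y' : nat) (l : seq nat) : Prop :=
  forall r c t, 0 < t -> r < size l -> 0 < c <= nth 0 l r ->
    ~ (hook_len l r c = e' * t /\ arm_len l r c = y' * t - 1).

(* (e,y)-regular for rational y with denominator z: (ez, yz)-regular *)
Definition ey_regular (e : nat) (y : rat) (l : seq nat) : Prop :=
  ey_regular_nat (e * `|denq y|%N) `|numq y|%N l.

(* Main.v *)
Require Import Defs.
From mathcomp Require Import all_boot all_order all_algebra.
From mathcomp Require Import zify.
Set Implicit Arguments. Unset Strict Implicit. Unset Printing Implicit Defensive.

Definition cnt (P : pred nat) (x : nat) : nat := count P (iota 0 x).

Lemma cntS P x : cnt P x.+1 = cnt P x + P x.
Proof. by rewrite /cnt -addn1 iotaD count_cat /= addn0. Qed.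

Lemma cnt0 P : cnt P 0 = 0. Proof. by []. Qed.

Lemma cnt_win P u v : u <= v -> cnt P v = cnt P u + count P (iota u (v - u)).
Proof. by move=> h; rewrite /cnt -count_cat -iotaD subnKC. Qed.

Lemma cnt_mono P u v : u <= v -> cnt P u <= cnt P v.
Proof. by move=> h; rewrite (cnt_win P h) leq_addr. Qed.

Lemma cnt_le P x : cnt P x <= x.
Proof. by rewrite /cnt -[X in _ <= X](size_iota 0 x) count_size. Qed.

Lemma cnt_C P x : cnt P x + cnt (predC P) x = x.
Proof. by rewrite /cnt count_predC size_iota. Qed.

Lemma cnt_split (P Q : pred nat) x : cnt P x = cnt (fun p => P p && Q p) x + cnt (fun p => P p && ~~ Q p) x.
Proof.
rewrite /cnt; elim: (iota 0 x) => //= y s ->.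
by case: (P y); case: (Q y) => /=; lia.
Qed.

Lemma cnt_predT x : cnt predT x = x.
Proof. by rewrite /cnt count_predT size_iota. Qed.

Lemma cnt_ivt Q x k : k < cnt Q x -> exists y, [/\ y < x, Q y & cnt Q y = k].
Proof.
elim: x => [|x IH]; first by rewrite cnt0.
rewrite cntS => h.
case: (ltnP k (cnt Q x)) => hk.
  by case: (IH hk) => y [h1 h2 h3]; exists y; split => //; apply: ltnW.
exists x; split => //; case: (Q x) h => /=; lia.
Qed.

Lemma win_all (P Q : pred nat) u v : (forall y, u <= y < v -> P y -> Q y) ->
  count (fun p => P p && Q p) (iota u (v - u)) = count P (iota u (v - u)).
Proof.
move=> h; apply: eq_in_count => y; rewrite mem_iota => /andP[h1 h2].
case Py: (P y) => //=; apply: h => //; rewrite h1 /=; lia.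
Qed.

Lemma count_andle (P Q : pred nat) s : count (fun p => P p && Q p) s <= count P s.
Proof. by elim: s => //= z s IH; case: (P z); case: (Q z) => /=; lia. Qed.

Lemma win_allE (P Q : pred nat) u v :
  count (fun p => P p && Q p) (iota u (v - u)) = count P (iota u (v - u)) ->
  forall y, u <= y < v -> P y -> Q y.
Proof.
move=> h y /andP[h1 h2] Py.
have : all (fun p => P p ==> Q p) (iota u (v - u)).
  move: h; elim: (iota u (v - u)) => //= z s IH H.
  have := count_andle P Q s.
  move: H; case: (P z); case: (Q z) => /= H1 H2; try (rewrite IH //); lia.
move/allP/(_ y); rewrite mem_iota h1 Py /=; apply; lia.
Qed.

Definition geq_rel : rel nat := fun x y => y <= x.

Lemma geq_trans : transitive geq_rel.
Proof. by move=> x y z /= h1 h2; apply: leq_trans h2 h1. Qed.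
Lemma geq_total : total geq_rel.
Proof. by move=> x y; rewrite /geq_rel orbC leq_total. Qed.

Lemma count_ltS (s : seq nat) x :
  count (fun y => y < x.+1) s = count (fun y => y < x) s + count (pred1 x) s.
Proof.
elim: s => //= y s ->; rewrite ltnS leq_eqVlt.
case: (ltngtP y x) => //= h; try lia.
Qed.

Lemma Bd_count (cs : seq nat) x : uniq cs ->
  cnt (fun p => p \in cs) x = count (fun y => y < x) cs.
Proof.
move=> u; elim: x => [|x IH].
  by rewrite cnt0; elim: cs {u} => //.
by rewrite cntS IH count_ltS count_uniq_mem.
Qed.

Lemma sorted_count (b : seq nat) r : sorted geq_rel b -> uniq b -> r < size b ->
  count (fun y => nth 0 b r < y) b = r /\
  count (fun y => y < nth 0 b r) b = size b - r.+1.
Proof.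
elim: b r => //= x b IH r so /andP[xb ub] hr.
have ab : all (fun y => y < x) b.
  apply/allP => y yb; have := order_path_min geq_trans so.
  move/allP/(_ y yb); rewrite /geq_rel leq_eqVlt => /orP[/eqP E|//].
  by move: xb; rewrite -E yb.
have sb : sorted geq_rel b by apply: path_sorted so.
case: r hr => [|r] hr /=.
  rewrite ltnn /=; split.
    apply/eqP; rewrite eqn0Ngt -has_count; apply/hasPn => y /(allP ab) hy.
    by rewrite -leqNgt ltnW.
  by rewrite add0n subn1 /=; apply/eqP; rewrite -all_count.
have [h1 h2] := IH r sb ub hr.
have xr : nth 0 b r < x by apply: (allP ab); apply: mem_nth.
rewrite xr h1 h2; rewrite ltnNge (ltnW xr) /=; split => //.
Qed.

Lemma filter_pos_nth (s : seq nat) r : sorted geq_rel s ->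
  nth 0 [seq x <- s | 0 < x] r = nth 0 s r.
Proof.
elim: s r => //= x s IH r so.
have sb : sorted geq_rel s by apply: path_sorted so.
case: x so => [|x] so /=.
  have a0 : all (fun y => y == 0) s.
    apply/allP => y ys; have := order_path_min geq_trans so.
    by move/allP/(_ y ys); rewrite /geq_rel leqn0.
  have -> : [seq x <- s | 0 < x] = [::].
    by apply/eqP; rewrite -(negbK (_ == _)) -has_filter; apply/hasPn => y /(allP a0) /eqP ->.
  case: r => // r; rewrite nth_nil.
  case: (ltnP r (size s)) => hr; last by rewrite nth_default.
  by apply/esym/eqP; apply: (allP a0); apply: mem_nth.
by case: r => // r /=; rewrite IH.
Qed.

Section Beads.
Variable cs : seq nat.
Hypothesis ucs : uniq cs.

Local Notation b := (sort geq_rel cs).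
Local Notation N := (size cs).
Definition Bd x := cnt (fun p => p \in cs) x.
Definition Gp x := cnt (fun p => p \notin cs) x.

Lemma size_b : size b = N. Proof. by rewrite size_sort. Qed.
Lemma mem_b x : (x \in b) = (x \in cs). Proof. by rewrite mem_sort. Qed.
Lemma sorted_b : sorted geq_rel b. Proof. exact: sort_sorted geq_total cs. Qed.
Lemma uniq_b : uniq b. Proof. by rewrite sort_uniq. Qed.
Lemma perm_b : perm_eq b cs. Proof. by rewrite perm_sort. Qed.

Lemma BG x : Bd x + Gp x = x. Proof. exact: cnt_C. Qed.
Lemma BdS x : Bd x.+1 = Bd x + (x \in cs). Proof. exact: cntS. Qed.
Lemma GpS x : Gp x.+1 = Gp x + (x \notin cs). Proof. exact: cntS. Qed.
Lemma Bd_mono u v : u <= v -> Bd u <= Bd v. Proof. exact: cnt_mono. Qed.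
Lemma Gp_mono u v : u <= v -> Gp u <= Gp v. Proof. exact: cnt_mono. Qed.

Lemma Bd_nth r : r < N -> Bd (nth 0 b r) = N - r.+1.
Proof.
move=> hr; rewrite /Bd Bd_count // -(permP perm_b).
have hr' : r < size b by rewrite size_b.
by have [_ ->] := sorted_count sorted_b uniq_b hr'; rewrite size_b.
Qed.

Lemma nth_b_in r : r < N -> nth 0 b r \in cs.
Proof. by move=> hr; rewrite -mem_b mem_nth // size_b. Qed.

Lemma pob_eq : partition_of_beads cs = [seq x <- map Gp b | 0 < x].
Proof.
rewrite /partition_of_beads /=; congr filter.
rewrite -[in RHS](mkseq_nth 0 b) /mkseq -map_comp size_b.
apply/eq_in_map => r; rewrite mem_iota /= => hr.
have E : (fun x : nat => leq^~ x) = geq_rel by [].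
rewrite E.
have h1 := Bd_nth hr; have h2 := BG (nth 0 b r).
have h3 : Bd (nth 0 b r) <= nth 0 b r by apply: cnt_le.
lia.
Qed.

Lemma sorted_Gb : sorted geq_rel (map Gp b).
Proof.
rewrite sorted_map; apply: sub_sorted sorted_b => x y; exact: Gp_mono.
Qed.

Lemma mu_nth r : nth 0 (partition_of_beads cs) r = if r < N then Gp (nth 0 b r) else 0.
Proof.
rewrite pob_eq filter_pos_nth ?sorted_Gb //.
case: ifP => hr; first by rewrite (nth_map 0) // size_b.
by rewrite nth_default // size_map size_b leqNgt hr.
Qed.

Lemma mu_size r : r < size (partition_of_beads cs) -> r < N.
Proof.
rewrite pob_eq size_filter => h; apply: leq_trans h _.
by rewrite -size_b -(size_map Gp) count_size.
Qed.

Lemma mu_conj c : 0 < c -> conj_part (partition_of_beads cs) c = count (fun y => c <= Gp y) cs.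
Proof.
move=> c0; rewrite /conj_part pob_eq count_filter count_map -(permP perm_b).
apply: eq_count => y /=; case: (leqP c (Gp y)) => //= h; apply: leq_trans c0 h.
Qed.

Lemma mu_count x : 0 < x -> count (pred1 x) (partition_of_beads cs) = count (fun y => Gp y == x) cs.
Proof.
move=> x0; rewrite pob_eq count_filter count_map -(permP perm_b).
apply: eq_count => y /=; case: eqP => //= ->; by [].
Qed.
End Beads.

Section Char.
Variable cs : seq nat.
Hypothesis ucs : uniq cs.
Local Notation b := (sort geq_rel cs).
Local Notation N := (size cs).
Local Notation mu := (partition_of_beads cs).
Local Notation Bd := (Bd cs).
Local Notation Gp := (Gp cs).

Lemma Bd_leN x : Bd x <= N.
Proof. by rewrite /Bd Bd_count // count_size. Qed.

Lemma count_gt y : count (fun w => y < w) cs = N - Bd y.+1.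
Proof.
rewrite /Bd Bd_count // -(count_predC (fun w => y < w) cs).
have -> : count (predC (fun w => y < w)) cs = count (fun w => w < y.+1) cs.
  by apply: eq_count => w; change (~~ (y < w) = (w < y.+1)); rewrite ltnS; case: ltnP.
lia.
Qed.

Lemma hook_word r y : r < N -> y < nth 0 b r -> y \notin cs ->
  hook_len mu r (Gp y).+1 = nth 0 b r - y /\
  arm_len mu r (Gp y).+1 = Gp (nth 0 b r) - Gp y - 1.
Proof.
move=> hr hy yn; rewrite /hook_len /arm_len mu_nth // hr mu_conj //.
set z := nth 0 b r in hy *.
have zin : z \in cs by apply: nth_b_in.
have -> : count (fun w => (Gp y).+1 <= Gp w) cs = count (fun w => y < w) cs.
  apply: eq_count => w /=.
  case: (ltnP y w) => h.
    have := Gp_mono cs h; rewrite GpS yn /=; lia.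
  have := Gp_mono cs h; lia.
rewrite count_gt.
have h1 := Bd_nth ucs hr; rewrite -/z in h1; have h2 := BdS cs z; rewrite zin /= in h2.
have h3 := GpS cs z; rewrite zin /= in h3.
have h4 := BdS cs y; rewrite (negbTE yn) /= in h4.
have h5 := GpS cs y; rewrite yn /= in h5.
have h6 := BG cs y.+1; have h7 := BG cs z.+1.
have h8 := Gp_mono cs hy; have h9 : Bd y.+1 <= Bd z.+1 by apply: Bd_mono; lia.
split; lia.
Qed.

Lemma char_ey E Y : ey_regular_nat E Y mu <->
  (forall y z t, 0 < t -> y \notin cs -> z \in cs -> y < z ->
     ~ (z - y = E * t /\ Gp z - Gp y - 1 = Y * t - 1)).
Proof.
split.
- rewrite /ey_regular_nat => H y z t ht yn zin yz [h1 h2].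
  have hr : index z b < N by rewrite -size_b index_mem mem_b.
  have hz : nth 0 b (index z b) = z by rewrite nth_index // mem_b.
  have := hook_word (y := y) hr; rewrite hz => /(_ yz yn) [k1 k2].
  have pos : 0 < nth 0 mu (index z b).
    rewrite mu_nth // hr hz; have := Gp_mono cs yz; rewrite GpS yn; lia.
  apply: (H (index z b) (Gp y).+1 t ht).
  + by case: (ltnP (index z b) (size mu)) => // hs; rewrite nth_default in pos.
  + rewrite /= mu_nth // hr hz; have := Gp_mono cs yz; rewrite GpS yn /=; lia.
  + by rewrite k1 // k2 // h1.
- move=> H r c t ht hr /andP[c0 hc] [h1 h2].
  have hr' := mu_size ucs hr.
  move: hc; rewrite mu_nth // hr' => hc.
  have zin := nth_b_in hr'.
  have [y [yz yn hy]] : exists y, [/\ y < nth 0 b r, y \notin cs & Gp y = c.-1].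
    have : c.-1 < Gp (nth 0 b r) by lia.
    by move/cnt_ivt => [y [k1 k2 k3]]; exists y.
  have Ec : c = (Gp y).+1 by lia.
  have [k1 k2] := hook_word hr' yz yn.
  apply: (H y (nth 0 b r) t ht yn zin yz).
  by rewrite -k1 -k2 -Ec.
Qed.

Lemma char_res k : 0 < k -> k_restricted k mu <->
  ~ (exists y y' z, [/\ y <= y', y' <= z, z \in cs, Gp y' - Gp y = y' - y & k <= y' - y]).
Proof.
move=> k0; split.
- move=> Hres [y [y' [z [h1 h2 h3 h4 h5]]]].
  have g1 := BG cs y; have g2 := BG cs y'; have g3 := Gp_mono cs h1; have g4 := Bd_mono cs h1.
  have eB : Bd y' = Bd y by lia.
  have f1 := Bd_mono cs h2; have f2 := BdS cs z; rewrite h3 in f2.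
  have f3 := Bd_leN z.+1.
  have [r hrd] : exists r, r = N - (Bd y').+1 by eexists.
  have hr : r < N by lia.
  have e1 := Bd_nth ucs hr.
  have bin := nth_b_in hr.
  have ge1 : y' <= nth 0 b r.
    case: (leqP y' (nth 0 b r)) => // hlt.
    have := Bd_mono cs hlt; rewrite BdS bin /=; lia.
  have m1 := Gp_mono cs ge1.
  have m2 : nth 0 mu r.+1 <= Gp y.
    rewrite mu_nth //; case: ifP => // hr1.
    have e2 := Bd_nth ucs hr1.
    case: (ltnP (nth 0 b r.+1) y) => hh; first by apply: Gp_mono; apply: ltnW.
    have := Bd_mono cs hh; lia.
  have := Hres r; rewrite (mu_nth ucs r) hr; lia.
- move=> Hno r; case: (ltnP (nth 0 mu r - nth 0 mu r.+1) k) => // hge; exfalso.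
  have hr : r < N.
    case: (ltnP r N) => // hh; move: hge; rewrite mu_nth // ltnNge hh /=; lia.
  have [y [hBy hGy]] : exists y, Bd y = N - r.+1 /\ Gp y = nth 0 mu r.+1.
    case: (ltnP r.+1 N) => hr1.
    + exists (nth 0 b r.+1).+1.
      have e2 := Bd_nth ucs hr1; have bin := nth_b_in hr1.
      rewrite BdS GpS bin mu_nth // hr1 /=; lia.
    + exists 0; rewrite mu_nth // ltnNge hr1 /= /Bd /Gp !cnt0; lia.
  set z := nth 0 b r.
  have e1 := Bd_nth ucs hr; rewrite -/z in e1; have zin := nth_b_in hr.
  move: hge; rewrite (mu_nth ucs r) hr -/z -hGy => hge.
  have g1 := BG cs y; have g2 := BG cs z.
  have yz : y <= z.
    case: (leqP y z) => // hh; have := Gp_mono cs (ltnW hh); lia.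
  apply: Hno; exists y, z, z; split => //; lia.
Qed.

Lemma char_reg k : 0 < k -> k_regular k mu <->
  ~ (exists y y', [/\ y <= y', Bd y' - Bd y = y' - y, k <= y' - y & 0 < Gp y]).
Proof.
move=> k0; split.
- move=> Hreg [y [y' [h1 h2 h3 h4]]].
  have := Hreg _ h4; rewrite mu_count //.
  have g1 := BG cs y; have g2 := BG cs y'.
  have w1 : all (fun w => w \in cs) (iota y (y' - y)).
    rewrite all_count size_iota; apply/eqP.
    have hw := cnt_win (fun p => p \in cs) h1; move: h2; rewrite /Bd; by rewrite hw addKn.
  have sub : {subset iota y (y' - y) <= [seq w <- cs | Gp w == Gp y]}.
    move=> w wi; rewrite mem_filter (allP w1 w wi) andbT.
    move: wi; rewrite mem_iota => /andP[k1 k2].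
    have k3 : w <= y' by lia.
    have := Gp_mono cs k1; have := Gp_mono cs k3; have := Bd_mono cs h1.
    lia.
  have := uniq_leq_size (iota_uniq y (y' - y)) sub.
  rewrite size_iota size_filter; move=> A B; have C := leq_trans h3 A; by have := leq_trans B C; rewrite ltnn.
- move=> Hno x x0; rewrite mu_count //.
  case: (ltnP (count (fun y => Gp y == x) cs) k) => // hge; exfalso.
  have : has (fun y => Gp y == x) cs by rewrite has_count; lia.
  move/hasP => [w win /eqP hw].
  have [g [gw gn hg]] : exists g, [/\ g < w, g \notin cs & Gp g = x.-1].
    have : x.-1 < Gp w by lia.
    by move/cnt_ivt => [g [k1 k2 k3]]; exists g.
  have [m [mn hm]] : exists m, m \notin cs /\ Gp m = x.
    have : x < Gp (x + N).+1.
      have := BG cs (x + N).+1; have := Bd_leN (x + N).+1; lia.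
    by move/cnt_ivt => [m [k1 k2 k3]]; exists m.
  have sub : {subset [seq w <- cs | Gp w == x] <= iota g.+1 (m - g.+1)}.
    move=> v; rewrite mem_filter => /andP[/eqP hv vin]; rewrite mem_iota.
    have gv : g < v.
      case: (ltnP g v) => // hh; have := Gp_mono cs hh; lia.
    have vm : v < m.
      case: (ltngtP v m) => // hh; last by move: mn; rewrite -hh vin.
      have := Gp_mono cs hh; rewrite GpS mn; lia.
    lia.
  have := uniq_leq_size (filter_uniq _ ucs) sub.
  rewrite size_iota size_filter => hsz.
  have e1 := GpS cs g; rewrite gn /= in e1.
  have g1 := BG cs g.+1; have g2 := BG cs m.
  have hk : k <= m - g.+1 := leq_trans hge hsz.
  apply: Hno; exists g.+1, m; split; lia.
Qed.
End Char.

Section Transport.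
Variable P : pred nat.
Hypothesis Pinf : forall k, exists x, k < cnt P x.
Local Notation R := (cnt P).

Lemma R_lt p q : P p -> p < q -> R p < R q.
Proof. by move=> pp pq; have := cnt_mono P pq; rewrite cntS pp; lia. Qed.

Lemma R_leE p q : P q -> R p <= R q -> p <= q.
Proof. by move=> pq h; case: (leqP p q) => // /(R_lt pq); lia. Qed.

Lemma R_ltE p q : R p < R q -> p < q.
Proof. by move=> h; case: (leqP q p) => // /(cnt_mono P); lia. Qed.

Lemma R_inj p q : P p -> P q -> R p = R q -> p = q.
Proof.
move=> pp pq h; case: (ltngtP p q) => // hh.
- by have := R_lt pp hh; lia.
- by have := R_lt pq hh; lia.
Qed.

Lemma R_surj y : exists p, P p /\ R p = y.
Proof.
have [x hx] := Pinf y; have [p [_ h1 h2]] := cnt_ivt hx; by exists p.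
Qed.

Variable bs : seq nat.
Hypothesis ubs : uniq bs.
Local Notation cs := [seq relabel P p | p <- bs & P p].
Local Notation GP := (cnt (fun p => P p && (p \notin bs))).
Local Notation BP := (cnt (fun p => P p && (p \in bs))).

Lemma ucs : uniq cs.
Proof.
rewrite map_inj_in_uniq ?filter_uniq // => p q; rewrite !mem_filter.
by move=> /andP[pp _] /andP[pq _]; apply: R_inj.
Qed.

Lemma mem_cs p : P p -> (R p \in cs) = (p \in bs).
Proof.
move=> pp; apply/mapP/idP.
- by move=> [q]; rewrite mem_filter => /andP[pq qb] /(R_inj pp pq) ->.
- by move=> pb; exists p => //; rewrite mem_filter pp.
Qed.

Lemma cs_inv y : y \in cs -> exists p, [/\ P p, p \in bs & y = R p].
Proof. by move/mapP => [p]; rewrite mem_filter => /andP[pp pb] ->; exists p. Qed.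

Lemma Gp_R x : Gp cs (R x) = GP x.
Proof.
elim: x => [|x IH]; first by [].
rewrite !cntS; case px: (P x) => /=; last by rewrite !addn0 IH.
by rewrite addn1 GpS IH mem_cs.
Qed.

Lemma Bd_R x : Bd cs (R x) = BP x.
Proof.
elim: x => [|x IH]; first by [].
rewrite !cntS; case px: (P x) => /=; last by rewrite !addn0 IH.
by rewrite addn1 BdS IH mem_cs.
Qed.

Lemma T_ey E Y : ey_regular_nat E Y (partition_of_beads cs) <->
  (forall a x t, 0 < t -> P a -> P x -> a \notin bs -> x \in bs -> a < x ->
     ~ (R x - R a = E * t /\ GP x - GP a - 1 = Y * t - 1)).
Proof.
rewrite char_ey ?ucs //; split.
- move=> H a x t ht pa px an xb ax [h1 h2].
  apply: (H (R a) (R x) t ht); rewrite ?mem_cs //; first exact: R_lt.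
  by rewrite !Gp_R.
- move=> H y z t ht yn zin yz [h1 h2].
  have [x [px xb Ez]] := cs_inv zin; subst z.
  have [a [pa ea]] := R_surj y; subst y.
  apply: (H a x t ht pa px); rewrite -?mem_cs //; first exact: R_ltE.
  by rewrite -!Gp_R.
Qed.

Lemma T_res k : 0 < k -> k_restricted k (partition_of_beads cs) <->
  ~ (exists a a' x, [/\ a <= a', P x && (x \in bs), R a' <= R x,
        GP a' - GP a = R a' - R a & k <= R a' - R a]).
Proof.
move=> k0; rewrite char_res ?ucs //; split.
- move=> H [a [a' [x [h1 /andP[h2 h3] h4 h5 h6]]]]; apply: H.
  exists (R a), (R a'), (R x); split => //; first exact: cnt_mono.
  + by rewrite mem_cs.
  + by rewrite !Gp_R.
- move=> H [y [y' [z [h1 h2 h3 h4 h5]]]]; apply: H.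
  have [x [px xb ez]] := cs_inv h3; subst z.
  have [a [pa ea]] := R_surj y; subst y.
  have [a' [pa' ea']] := R_surj y'; subst y'.
  exists a, a', x; split => //; first exact: R_leE.
  + by rewrite px xb.
  + by rewrite -!Gp_R.
Qed.

Lemma T_reg k : 0 < k -> k_regular k (partition_of_beads cs) <->
  ~ (exists a a', [/\ a <= a', BP a' - BP a = R a' - R a, k <= R a' - R a & 0 < GP a]).
Proof.
move=> k0; rewrite char_reg ?ucs //; split.
- move=> H [a [a' [h1 h2 h3 h4]]]; apply: H.
  exists (R a), (R a'); split => //; first exact: cnt_mono.
  + by rewrite !Bd_R.
  + by rewrite Gp_R.
- move=> H [y [y' [h1 h2 h3 h4]]]; apply: H.
  have [a [pa ea]] := R_surj y; subst y.
  have [a' [pa' ea']] := R_surj y'; subst y'.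
  exists a, a'; split => //; first exact: R_leE.
  + by rewrite -!Bd_R.
  + by rewrite -Gp_R.
Qed.
End Transport.

Lemma count_split_seq (P Q : pred nat) s :
  count Q s = count (fun p => P p && Q p) s + count (fun p => ~~ P p && Q p) s.
Proof. by elim: s => //= y s ->; case: (P y); case: (Q y) => /=; lia. Qed.

Lemma win_full (Q : pred nat) u v : count Q (iota u (v - u)) = v - u ->
  forall y, u <= y < v -> Q y.
Proof.
move=> h y hy; have : all Q (iota u (v - u)) by rewrite all_count size_iota h.
move/allP; apply; rewrite mem_iota; lia.
Qed.

Lemma win_fullI (Q : pred nat) u v : (forall y, u <= y < v -> Q y) ->
  count Q (iota u (v - u)) = v - u.
Proof.
move=> h; apply/eqP; rewrite -{2}(size_iota u (v - u)) -all_count.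
apply/allP => y; rewrite mem_iota => hy; apply: h; lia.
Qed.

Lemma win_none (Q : pred nat) u v : (forall y, u <= y < v -> ~~ Q y) ->
  count Q (iota u (v - u)) = 0.
Proof.
move=> h; apply/eqP; rewrite -leqn0 leqNgt -has_count; apply/hasPn => y.
rewrite mem_iota => hy; apply: h; lia.
Qed.

Lemma win_mem (Q : pred nat) u v y : u <= y < v -> Q y -> 0 < count Q (iota u (v - u)).
Proof.
move=> hy qy; rewrite -has_count; apply/hasP; exists y => //; rewrite mem_iota; lia.
Qed.

Lemma pigeon (Q : pred nat) e m T a : m * T < count Q (iota a (e * T)) ->
  exists j, j < T /\ m < count Q (iota (a + e * j) e).
Proof.
elim: T => [|T IH]; first by rewrite !muln0.
rewrite [e * _]mulnS [e + _]addnC iotaD count_cat => h.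
case: (ltnP m (count Q (iota (a + e * T) e))) => hh; first by exists T.
have : m * T < count Q (iota a (e * T)) by lia.
by move/IH => [j [h1 h2]]; exists j; split => //; apply: ltnW.
Qed.

Lemma win_mem' (Q : pred nat) u k y : u <= y < u + k -> Q y -> 0 < count Q (iota u k).
Proof.
move=> hy qy; rewrite -has_count; apply/hasP; exists y => //; rewrite mem_iota; lia.
Qed.

Lemma count_split2 (P Q : pred nat) s :
  count P s = count (fun p => P p && Q p) s + count (fun p => P p && ~~ Q p) s.
Proof. by elim: s => //= y s ->; case: (P y); case: (Q y) => /=; lia. Qed.

Section Per.
Variable e : nat.
Hypothesis e0 : 0 < e.
Variable S : {set 'I_e}.

Lemma inI_add p t : inI S (p + e * t) = inI S p.
Proof. by rewrite /inI addnC mulnC modnMDl. Qed.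

Lemma count_inI0 : count (inI S) (iota 0 e) = #|S|.
Proof.
rewrite -val_enum_ord count_map cardE size_filter -enumT.
apply: eq_count => i /=; rewrite /inI modn_small //.
apply/existsP/idP.
- by move=> [s /andP[sS /eqP hs]]; have -> : i = s by apply: val_inj.
- by move=> iS; exists i; rewrite iS eqxx.
Qed.

Lemma count_inI_win a : count (inI S) (iota a e) = #|S|.
Proof.
elim: a => [|a IH]; first exact: count_inI0.
have h1 : iota a e.+1 = a :: iota a.+1 e by [].
have h2 : iota a e.+1 = iota a e ++ [:: a + e] by rewrite -addn1 iotaD.
have := congr1 (count (inI S)) h2; rewrite h1 /= count_cat /= IH.
have := inI_add a 1; rewrite muln1 => ->; by rewrite addn0 addnC => /eqP; rewrite eqn_add2r => /eqP.
Qed.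

Lemma count_inI_mul a t : count (inI S) (iota a (e * t)) = #|S| * t.
Proof.
elim: t a => [|t IH] a; first by rewrite muln0 muln0.
by rewrite mulnS iotaD count_cat count_inI_win IH; lia.
Qed.

Lemma card_S_le : #|S| <= e.
Proof. by have := max_card S; rewrite card_ord. Qed.

Lemma count_notI_mul a t : count (fun p => ~~ inI S p) (iota a (e * t)) = (e - #|S|) * t.
Proof.
have := count_predC (inI S) (iota a (e * t)); rewrite size_iota count_inI_mul.
have := card_S_le; rewrite mulnBl; move=> h1 h2.
have -> : count (fun p => ~~ inI S p) (iota a (e * t)) = count (predC (inI S)) (iota a (e * t)) by [].
lia.
Qed.

Lemma Pinf_I : 0 < #|S| -> forall k, exists x, k < cnt (inI S) x.
Proof.
move=> s0 k; exists (e * k.+1); rewrite /cnt count_inI_mul; nia.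
Qed.

Lemma Pinf_notI : #|S| < e -> forall k, exists x, k < cnt (fun p => ~~ inI S p) x.
Proof.
move=> s0 k; exists (e * k.+1); rewrite /cnt count_notI_mul; nia.
Qed.
End Per.

Lemma Pinf_T : forall k, exists x, k < cnt predT x.
Proof. by move=> k; exists k.+1; rewrite cnt_predT. Qed.

Lemma nth_mono_l (l : seq nat) i j : sorted geq_rel l -> i <= j -> nth 0 l j <= nth 0 l i.
Proof.
elim: l i j => [|x l IH] i j so hij; first by rewrite !nth_nil.
have sl : sorted geq_rel l by apply: path_sorted so.
case: i hij => [|i] hij; case: j hij => [|j] hij //=.
  case: (ltnP j (size l)) => hj; last by rewrite nth_default.
  have := order_path_min geq_trans so; move/allP; apply; exact: mem_nth.
exact: IH.
Qed.

Section Ab.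
Variables (n : nat) (l : seq nat).
Hypothesis pl : is_partition l.
Hypothesis sl : size l <= n.

Lemma sorted_l : sorted geq_rel l. Proof. by case/andP: pl. Qed.
Lemma pos_l : all (fun x => 0 < x) l. Proof. by case/andP: pl. Qed.

Lemma nth_ab r : r < n -> nth 0 (abacus n l) r = nth 0 l r + (n - r.+1).
Proof. by move=> hr; rewrite /abacus (nth_map 0) ?size_iota // nth_iota. Qed.

Lemma size_ab : size (abacus n l) = n. Proof. by rewrite size_map size_iota. Qed.

Lemma sorted_ab : sorted geq_rel (abacus n l).
Proof.
rewrite /abacus sorted_map; apply: sub_sorted (iota_ltn_sorted 0 n) => i j /= hij.
rewrite /geq_rel; have := nth_mono_l sorted_l (ltnW hij); lia.
Qed.

Lemma uniq_ab : uniq (abacus n l).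
Proof.
rewrite /abacus map_inj_in_uniq ?iota_uniq // => i j; rewrite !mem_iota /= => hi hj.
have h1 := nth_mono_l sorted_l (i := i) (j := j); have h2 := nth_mono_l sorted_l (i := j) (j := i).
case: (ltngtP i j) => // hh; [have := h1 (ltnW hh) | have := h2 (ltnW hh)]; lia.
Qed.

Lemma pob_ab : partition_of_beads (abacus n l) = l.
Proof.
rewrite /partition_of_beads /= sorted_sort ?sorted_ab //; last exact: geq_trans.
rewrite size_ab.
have -> : [seq nth 0 (abacus n l) r + r.+1 - n | r <- iota 0 n] = [seq nth 0 l r | r <- iota 0 n].
  apply/eq_in_map => r; rewrite mem_iota /= => hr; rewrite nth_ab //; lia.
rewrite -(subnKC sl) iotaD map_cat filter_cat.
have -> : [seq nth 0 l r | r <- iota 0 (size l)] = l by rewrite -{3}(mkseq_nth 0 l).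
rewrite (all_filterP pos_l).
have -> : [seq x <- [seq nth 0 l r | r <- iota (0 + size l) (n - size l)] | 0 < x] = [::].
  apply/eqP; rewrite -(negbK (_ == _)) -has_filter; apply/hasPn => x /mapP [r].
  rewrite mem_iota => /andP[h1 _] ->; rewrite nth_default //.
by rewrite cats0.
Qed.

Lemma subT_ab : [seq relabel predT p | p <- abacus n l & predT p] = abacus n l.
Proof.
rewrite filter_predT -[RHS]map_id; apply: eq_map => p.
by rewrite /relabel count_predT size_iota.
Qed.
End Ab.

Section Main.
Variables (e c : nat) (S : {set 'I_e}) (bs : seq nat).
Variable cb : nat.
Hypothesis he : 4 <= e.
Hypothesis hc : #|S| = c.
Hypothesis hc2 : 2 <= c <= e - 2.
Hypothesis hcb : cb = e - c.
Hypothesis sep : forall p q, inI S p -> p \notin bs -> ~~ inI S q -> q \in bs -> q < p.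

Local Notation I := (inI S).
Local Notation NI := (fun p => ~~ inI S p).
Local Notation GAP := (fun p => p \notin bs).
Local Notation IG := (fun p => inI S p && (p \notin bs)).
Local Notation IB := (fun p => inI S p && (p \in bs)).
Local Notation NG := (fun p => ~~ inI S p && (p \notin bs)).

Lemma e0 : 0 < e. Proof. lia. Qed.

Lemma F1 x y : ~~ I x -> x \in bs -> y < x -> I y -> y \in bs.
Proof.
move=> nx xb yx iy; case yb: (y \in bs) => //.
by have := sep iy (negbT yb) nx xb; lia.
Qed.

Lemma F2 a y : I a -> a \notin bs -> ~~ I y -> a < y -> y \notin bs.
Proof.
move=> ia an ny ay; apply/negP => yb.
by have := sep ia an ny yb; lia.
Qed.

Lemma cI a t : count I (iota a (e * t)) = c * t.
Proof. by rewrite count_inI_mul ?e0 // hc. Qed.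

Lemma cN a t : count NI (iota a (e * t)) = cb * t.
Proof. by rewrite count_notI_mul ?e0 // hc hcb. Qed.

Lemma splitG s : count GAP s = count IG s + count NG s.
Proof. exact: count_split_seq. Qed.

Lemma IG_le s : count IG s <= count I s.
Proof. exact: count_andle. Qed.
Lemma NG_le s : count NG s <= count NI s.
Proof. exact: count_andle. Qed.

Lemma hook_NI a T : ~~ I (a + e * T) -> (a + e * T) \in bs ->
  count GAP (iota a (e * T)) <= cb * T.
Proof.
move=> nx xb.
have h0 : count IG (iota a (e * T)) = 0.
  have := win_none (Q := IG) (u := a) (v := a + e * T); rewrite addKn; apply.
  move=> y hy; apply/negP => /andP[iy /negP yn]; apply: yn.
  apply: (F1 nx xb) => //; lia.
rewrite splitG h0 -(cN a T); exact: NG_le.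
Qed.

Lemma hook_I a T : I (a + e * T) -> a \notin bs ->
  I a /\ count NG (iota a (e * T)) = cb * T.
Proof.
move=> ix an; have ia : I a by rewrite -(inI_add S a T).
split => //; rewrite -(cN a T).
have := win_all (P := NI) (Q := GAP) (u := a) (v := a + e * T); rewrite addKn; apply.
move=> y hy ny; apply: (F2 ia an ny).
case: (ltngtP a y) => // hh; [lia | by move: ny; rewrite -hh ia].
Qed.

Lemma R_add (P : pred nat) a t k : count P (iota a (e * t)) = k ->
  cnt P (a + e * t) = cnt P a + k.
Proof. by move=> h; rewrite (cnt_win P (leq_addr _ _)) addKn h. Qed.

Lemma G_win (P : pred nat) a x : a <= x -> cnt P x - cnt P a = count P (iota a (x - a)).
Proof. by move=> h; rewrite (cnt_win P h); lia. Qed.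

Lemma gap_head a x : a < x -> a \notin bs -> 0 < count IG (iota a (x - a)) \/ ~~ I a.
Proof.
move=> ax an; case ia: (I a); last by right.
left; apply: (win_mem (y := a)); first lia.
by rewrite ia an.
Qed.

Lemma cNe : cnt NI e = cb.
Proof. by have := R_add (P := NI) (cN 0 1); rewrite add0n !muln1. Qed.

Lemma allI_win a x : ~~ I x -> x \in bs -> a <= x -> count IG (iota a (x - a)) = 0.
Proof.
move=> nx xb ax; apply: win_none => y hy; apply/negP => /andP[iy /negP yn]; apply: yn.
apply: (F1 nx xb) => //; lia.
Qed.

Lemma W1 : (forall a x t, 0 < t -> a \notin bs -> x \in bs -> a < x ->
     ~ (x - a = e * t /\ cnt GAP x - cnt GAP a - 1 = cb * t - 1))
  <-> ~ (exists a a' x, [/\ a <= a', NI x && (x \in bs), cnt NI a' <= cnt NI x,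
        cnt NG a' - cnt NG a = cnt NI a' - cnt NI a & cb <= cnt NI a' - cnt NI a]).
Proof.
split.
- move=> H [a [a' [x [h1 /andP[nx xb] h3 h4 h5]]]].
  have ax : a' <= x by apply: (R_leE (P := NI)).
  have exq : exists q, (a' <= q) && ~~ I q && (q \in bs) by exists x; rewrite ax nx xb.
  case: (ex_minnP exq) => x' Hx' hmin.
  move: Hx' => /andP[/andP[h6 h7] h8].
  have hR : cnt NI a' <= cnt NI x' by apply: cnt_mono.
  have hex : e <= x'.
    case: (leqP e x') => // hh; have := R_lt (P := NI) h7 hh; rewrite cNe; lia.
  have [a0 ha0] : exists a0, a0 = x' - e by eexists.
  have ex' : x' = a0 + e * 1 by lia.
  have RN0 : cnt NI x' = cnt NI a0 + cb * 1 by rewrite ex'; apply: R_add; apply: cN.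
  have hwin : count NG (iota a (a' - a)) = count NI (iota a (a' - a)).
    by rewrite -!G_win.
  have hI : forall y, a0 <= y < x' -> I y -> y \in bs.
    move=> y hy iy; apply: (F1 h7 h8) => //; lia.
  have hN : forall y, a0 <= y < x' -> ~~ I y -> y \notin bs.
    move=> y hy ny; case: (leqP a' y) => ha'y.
      apply/negP => yb; have := hmin y; rewrite ha'y ny yb /= => /(_ isT); lia.
    have hay : a <= y.
      case: (leqP a y) => // hya; exfalso.
      have k1 := R_lt (P := NI) ny hya.
      have k2 : a0 <= y by lia.
      have k3 := cnt_mono NI k2.
      lia.
    apply: (win_allE (P := NI) (Q := GAP) hwin); [lia | exact: ny].
  have na0 : ~~ I a0 by rewrite -(inI_add S a0 1) -ex'.
  apply: (H a0 x' 1 isT (hN a0 ltac:(lia) na0) h8 ltac:(lia)); split; first lia.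
  have hw : x' - a0 = e * 1 by lia.
  rewrite G_win; last lia.
  rewrite hw splitG.
  have k1 : count IG (iota a0 (e * 1)) = 0.
    rewrite -hw; apply: win_none => y hy; apply/negP => /andP[iy /negP yn]; apply: yn.
    by apply: hI.
  have k2 : count NG (iota a0 (e * 1)) = count NI (iota a0 (e * 1)).
    rewrite -hw; apply: win_all => y hy ny; exact: hN.
  rewrite k1 k2 cN; lia.
- move=> Hno a x t ht an xb ax [h1 h2].
  have hx : x = a + e * t by lia.
  have gx : cnt GAP x - cnt GAP a = count GAP (iota a (e * t)) by rewrite G_win ?h1 //; lia.
  have gpos : 0 < count GAP (iota a (e * t)).
    by rewrite -h1; apply: (win_mem (y := a)) => //; lia.
  have ect : 0 < cb * t by rewrite muln_gt0; lia.
  have g1 : count GAP (iota a (e * t)) = cb * t by lia.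
  case ix: (I x).
  + have ix' : I (a + e * t) by rewrite -hx.
    have [ia k] := hook_I ix' an.
    have k2 : 0 < count IG (iota a (e * t)).
      by apply: (win_mem' (y := a)); [lia | rewrite ia an].
    have := splitG (iota a (e * t)); lia.
  + apply: Hno; exists a, x, x; split => //; first lia.
    * by rewrite ix xb.
    * have k0 := allI_win (negbT ix) xb (ltnW ax); rewrite h1 in k0.
      have := splitG (iota a (e * t)).
      rewrite !G_win; try lia; rewrite h1 cN; lia.
    * rewrite G_win; last lia.
      rewrite h1 cN; have : 1 <= t by []; nia.
Qed.

Lemma RIe a : cnt I (a + e) = cnt I a + c.
Proof. by have := R_add (P := I) (cI a 1); rewrite !muln1. Qed.

Lemma W4 : (exists a a' x, [/\ a <= a', x \in bs, a' <= x,
               cnt GAP a' - cnt GAP a = a' - a & e <= a' - a])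
  <-> (exists a a' x, [/\ a <= a', I x && (x \in bs), cnt I a' <= cnt I x,
               cnt IG a' - cnt IG a = cnt I a' - cnt I a & c <= cnt I a' - cnt I a]).
Proof.
split.
- move=> [a [a' [x [h1 h2 h3 h4 h5]]]].
  have allgap : forall y, a <= y < a' -> y \notin bs.
    apply: (win_full (Q := GAP)); rewrite -G_win //.
  case ix: (I x); last first.
    exfalso.
    have : has I (iota a (e * 1)) by rewrite has_count cI; lia.
    move/hasP => [y]; rewrite mem_iota muln1 => hy iy.
    have := F1 (negbT ix) h2 (y := y) ltac:(lia) iy.
    by rewrite (negbTE (allgap y ltac:(lia))).
  exists a, (a + e), x; split => //; first lia.
  + by rewrite ix h2.
  + by apply: cnt_mono; lia.
  + rewrite !G_win; try lia.
    apply: win_all => y hy iy; apply: allgap; lia.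
  + rewrite RIe; lia.
- move=> [a [a' [x [h1 /andP[ix xb] h3 h4 h5]]]].
  have hIg : forall y, a <= y < a' -> I y -> y \notin bs.
    apply: (win_allE (P := I) (Q := GAP)); rewrite -!G_win //.
  have : has I (iota a (a' - a)) by rewrite has_count -G_win //; lia.
  move/hasP => [q0]; rewrite mem_iota => hq0 iq0.
  have exq : exists q, (a <= q) && I q by exists q0; rewrite iq0 andbT; lia.
  case: (ex_minnP exq) => p Hp hmin; move: Hp => /andP[ap ip].
  have pq0 : p <= q0 by apply: hmin; rewrite iq0 andbT; lia.
  have RIpa : cnt I p = cnt I a.
    have := cnt_mono I ap; have := G_win I ap; rewrite win_none; first lia.
    move=> y hy; apply/negP => iy; have := hmin y; rewrite iy andbT.
    have -> : a <= y by lia.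
    move=> /(_ isT); lia.
  have pn : p \notin bs by apply: hIg => //; lia.
  have RIpe := RIe p.
  have allgap : forall y, p <= y < p + e -> y \notin bs.
    move=> y hy; case iy: (I y).
      apply: hIg => //; apply/andP; split; first lia.
      case: (ltnP y a') => // hh; exfalso.
      have k1 := cnt_mono I hh.
      have k2 := R_lt (P := I) iy (q := p + e) ltac:(lia).
      lia.
    apply: (F2 ip pn (negbT iy)).
    case: (ltngtP p y) => // hh; [lia | by move: iy; rewrite -hh ip].
  have xpe : p + e <= x.
    case: (leqP (p + e) x) => // hh; have := R_lt (P := I) ix hh; lia.
  exists p, (p + e), x; split => //; first lia.
  + rewrite !G_win; try lia.
    rewrite win_fullI; first lia.
    move=> y hy; apply: allgap; lia.
  + lia.
Qed.

Lemma gap_count a x t : 0 < t -> a \notin bs -> a < x -> x - a = e * t ->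
  cnt GAP x - cnt GAP a = count GAP (iota a (e * t)) /\ 0 < count GAP (iota a (e * t)).
Proof.
move=> ht an ax h1; split; first by rewrite G_win ?h1 //; lia.
by rewrite -h1; apply: (win_mem' (y := a)) => //; lia.
Qed.

Lemma W3 z Y : 0 < z -> (cb + 1) * z <= Y ->
  (forall a x t, 0 < t -> a \notin bs -> x \in bs -> a < x ->
     ~ (x - a = e * z * t /\ cnt GAP x - cnt GAP a - 1 = Y * t - 1))
  <-> (forall a x t, 0 < t -> I a -> I x -> a \notin bs -> x \in bs -> a < x ->
     ~ (cnt I x - cnt I a = c * z * t /\ cnt IG x - cnt IG a - 1 = (Y - cb * z) * t - 1)).
Proof.
move=> z0 hY.
have hY' : cb * z <= Y by move: hY; rewrite mulnDl mul1n; lia.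
split.
- move=> H a x t ht ia ix an xb ax [h1 h2].
  have T0 : 0 < z * t by rewrite muln_gt0 z0.
  have m1 : (Y - cb * z) * t = Y * t - cb * (z * t) by rewrite mulnBl mulnA.
  have m2 : cb * (z * t) <= Y * t by rewrite mulnA leq_mul2r hY' orbT.
  have m3 : z * t <= Y * t - cb * (z * t).
    rewrite -m1 leq_mul2r; apply/orP; right; move: hY; rewrite mulnDl mul1n; lia.
  rewrite -mulnA in h1.
  have RA := R_add (P := I) (cI a (z * t)).
  have ix' : I (a + e * (z * t)) by rewrite inI_add.
  have hx : x = a + e * (z * t) by apply: (R_inj (P := I)) => //; lia.
  have [_ kN] := hook_I (a := a) (T := z * t) ix' an.
  have [gw gp] := gap_count (t := z * t) T0 an ax ltac:(lia).
  have k1 := splitG (iota a (e * (z * t))).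
  have xa : x - a = e * (z * t) by lia.
    have k2 := G_win IG (ltnW ax); rewrite xa in k2.
  have k3 : 0 < count IG (iota a (e * (z * t))) by apply: (win_mem' (y := a)); [lia | rewrite ia an].
  apply: (H a x t ht an xb ax); rewrite -mulnA; split; first lia.
  lia.
- move=> H a x t ht an xb ax [h1 h2].
  have T0 : 0 < z * t by rewrite muln_gt0 z0.
  have m1 : (Y - cb * z) * t = Y * t - cb * (z * t) by rewrite mulnBl mulnA.
  have m3 : cb * (z * t) + z * t <= Y * t.
    have := leq_mul2r t ((cb + 1) * z) Y; rewrite hY orbT -mulnA mulnDl mul1n => h; exact: h.
  rewrite -mulnA in h1.
  have hx : x = a + e * (z * t) by lia.
  have [gw gp] := gap_count T0 an ax h1.
  have Yt : 0 < Y * t by lia.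
  case ix: (I x).
  + have ix' : I (a + e * (z * t)) by rewrite -hx.
    have [ia kN] := hook_I ix' an.
    have k1 := splitG (iota a (e * (z * t))).
    have xa : x - a = e * (z * t) by lia.
    have k2 := G_win IG (ltnW ax); rewrite xa in k2.
    have RA := R_add (P := I) (cI a (z * t)); rewrite -hx in RA.
    apply: (H a x t ht ia ix an xb ax); rewrite -mulnA; split; lia.
  + have nx : ~~ I (a + e * (z * t)) by rewrite -hx ix.
    have xb' : (a + e * (z * t)) \in bs by rewrite -hx.
    have := hook_NI nx xb'.
    lia.
Qed.

Lemma W2 z Y :
  ~ (exists a a', [/\ a <= a', cnt IB a' - cnt IB a = cnt I a' - cnt I a,
                    c <= cnt I a' - cnt I a & 0 < cnt IG a]) ->
  0 < z -> cb * z < Y -> Y < (cb + 1) * z ->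
  (forall a x t, 0 < t -> a \notin bs -> x \in bs -> a < x ->
     ~ (x - a = e * z * t /\ cnt GAP x - cnt GAP a - 1 = Y * t - 1)).
Proof.
move=> Hreg z0 hY1 hY2 a x t ht an xb ax [h1 h2].
have T0 : 0 < z * t by rewrite muln_gt0 z0.
have m1 : cb * (z * t) < Y * t by rewrite mulnA ltn_mul2r ht hY1.
have m2 : Y * t < cb * (z * t) + z * t.
  have h := hY2; rewrite -(ltn_pmul2r ht) in h; move: h; rewrite !mulnDl -!mulnA; by rewrite mul0n addn0.
rewrite -mulnA in h1.
have hx : x = a + e * (z * t) by lia.
have [gw gp] := gap_count T0 an ax h1.
case ix: (I x); last first.
  have nx : ~~ I (a + e * (z * t)) by rewrite -hx ix.
  have xb' : (a + e * (z * t)) \in bs by rewrite -hx.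
  have := hook_NI nx xb'; lia.
have ix' : I (a + e * (z * t)) by rewrite -hx.
have [ia kN] := hook_I ix' an.
have k1 := splitG (iota a (e * (z * t))).
have k4 : count I (iota a (e * (z * t))) = count IB (iota a (e * (z * t))) + count IG (iota a (e * (z * t))).
  exact: count_split2.
have k5 := cI a (z * t).
have cT : (c - 1) * (z * t) = c * (z * t) - z * t by rewrite mulnBl mul1n.
have cT2 : z * t <= c * (z * t) by rewrite leq_pmull; lia.
have pg : (c - 1) * (z * t) < count IB (iota a (e * (z * t))) by lia.
have [j [hj hc']] := pigeon pg.
have w1 := cI (a + e * j) 1; rewrite muln1 in w1.
have w2 : count I (iota (a + e * j) e) = count IB (iota (a + e * j) e) + count IG (iota (a + e * j) e).
  exact: count_split2.
have w3 : count IG (iota (a + e * j) e) = 0 by lia.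
have j0 : 0 < j.
  case: j {hj hc' w1 w2} w3 => // w3.
  have : 0 < count IG (iota (a + e * 0) e).
    by apply: (win_mem' (y := a)); [lia | rewrite ia an].
  lia.
apply: Hreg; exists (a + e * j), (a + e * j + e); split; first lia.
- rewrite !G_win; try lia.
  rewrite addKn; lia.
- rewrite RIe; lia.
- have := cnt_mono IG (u := a.+1) (v := a + e * j) ltac:(nia).
  rewrite cntS ia an /=; lia.
Qed.
End Main.

Import Order.TTheory GRing.Theory Num.Theory.

Lemma num_pos (y : rat) : (0 < y)%R -> numq y = Posz `|numq y|%N.
Proof. by move=> h; rewrite abszE gtr0_norm // numq_gt0. Qed.

Lemma den_pos (y : rat) : denq y = Posz `|denq y|%N.
Proof. by rewrite abszE gtr0_norm // denq_gt0. Qed.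

Lemma den_gt0 (y : rat) : (0 < `|denq y|)%N.
Proof. by rewrite absz_gt0 denq_neq0. Qed.

Lemma yd (y : rat) : ((numq y)%:~R = y * (denq y)%:~R :> rat)%R.
Proof. exact: numqE. Qed.

Lemma rat_lt (y : rat) (m : nat) : ((Posz m)%:~R < y)%R -> (m * `|denq y| < `|numq y|)%N.
Proof.
move=> h.
have y0 : (0 < y)%R by apply: le_lt_trans h; rewrite ler0z.
have d0 : (0 < (denq y)%:~R :> rat)%R by rewrite ltr0z denq_gt0.
have : ((Posz m)%:~R * (denq y)%:~R < (numq y)%:~R :> rat)%R by rewrite yd ltr_pM2r.
rewrite -intrM ltr_int {1}den_pos [numq y]num_pos // -PoszM ltz_nat //.
Qed.

Lemma rat_le (y : rat) (m : nat) : ((Posz m)%:~R <= y)%R -> (0 < y)%R -> (m * `|denq y| <= `|numq y|)%N.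
Proof.
move=> h y0.
have d0 : (0 < (denq y)%:~R :> rat)%R by rewrite ltr0z denq_gt0.
have : ((Posz m)%:~R * (denq y)%:~R <= (numq y)%:~R :> rat)%R by rewrite yd ler_pM2r.
rewrite -intrM ler_int {1}den_pos [numq y]num_pos // -PoszM lez_nat //.
Qed.

Lemma rat_gt (y : rat) (m : nat) : (y < (Posz m)%:~R)%R -> (0 < y)%R -> (`|numq y| < m * `|denq y|)%N.
Proof.
move=> h y0.
have d0 : (0 < (denq y)%:~R :> rat)%R by rewrite ltr0z denq_gt0.
have : ((numq y)%:~R < (Posz m)%:~R * (denq y)%:~R :> rat)%R by rewrite yd ltr_pM2r.
rewrite -intrM ltr_int [denq y]den_pos [numq y]num_pos // -PoszM ltz_nat //.
Qed.

From mathcomp Require Import ring.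

Lemma rat_sub (y : rat) (m : nat) : ((Posz m)%:~R < y)%R ->
  `|denq (y - (Posz m)%:~R)|%N = `|denq y|%N /\
  `|numq (y - (Posz m)%:~R)|%N = (`|numq y| - m * `|denq y|)%N.
Proof.
move=> h.
have y0 : (0 < y)%R by apply: le_lt_trans h; rewrite ler0z.
have hl := rat_lt h.
set Y := `|numq y|%N in hl *; set z := `|denq y|%N in hl *.
have eN : numq y = Posz Y by rewrite /Y -num_pos.
have eD : denq y = Posz z by rewrite /z -den_pos.
have z0 : (0 < z)%N by apply: den_gt0.
have E : (y - (Posz m)%:~R = (Posz (Y - m * z))%:~R / (Posz z)%:~R :> rat)%R.
  rewrite -{1}[y]divq_num_den eN eD.
  have -> : Posz (Y - m * z) = (Posz Y - Posz m * Posz z)%R.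
    by rewrite -PoszM subzn // ltnW.
  rewrite intrB intrM; field.
  by rewrite pnatr_eq0 -lt0n.
have cp : coprime `|Posz (Y - m * z)| `|Posz z|.
  rewrite /= /coprime gcdnC -(gcdnMDl m) subnKC ?(ltnW hl) // gcdnC.
  have := coprime_num_den y; rewrite /coprime -/Y -/z; done.
rewrite E coprimeq_den // coprimeq_num //=.
have -> : (Posz z == 0) = false by apply/negbTE; rewrite eqz_nat -lt0n.
split => //.
by rewrite gtr0_sg ?ltz_nat // mul1r.
Qed.

Section Lam.
Variables (n : nat) (l : seq nat).
Hypothesis pl : is_partition l.
Hypothesis sl : size l <= n.
Local Notation bs := (abacus n l).
Local Notation GAP := (fun p => p \notin abacus n l).

Lemma L_ey E Y : ey_regular_nat E Y l <->
  (forall a x t, 0 < t -> a \notin bs -> x \in bs -> a < x ->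
     ~ (x - a = E * t /\ cnt GAP x - cnt GAP a - 1 = Y * t - 1)).
Proof.
have := T_ey Pinf_T (uniq_ab pl sl) E Y; rewrite subT_ab pob_ab // => ->.
split => H.
- move=> a x t ht an xb ax [h1 h2].
  apply: (H a x t ht isT isT an xb ax); split; first by rewrite !cnt_predT.
  exact: h2.
- move=> a x t ht _ _ an xb ax [h1 h2].
  apply: (H a x t ht an xb ax); split; first by rewrite -(cnt_predT x) -(cnt_predT a).
  exact: h2.
Qed.

Lemma L_res k : 0 < k -> k_restricted k l <->
  ~ (exists a a' x, [/\ a <= a', x \in bs, a' <= x,
        cnt GAP a' - cnt GAP a = a' - a & k <= a' - a]).
Proof.
move=> k0; have := T_res Pinf_T (uniq_ab pl sl) k0; rewrite subT_ab pob_ab // => ->.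
split => H [a [a' [x [h1 h2 h3 h4 h5]]]]; apply: H; exists a, a', x.
- split => //; rewrite ?cnt_predT //; exact: h4.
- move: h2 h3 h4 h5; rewrite !cnt_predT => h2 h3 h4 h5.
  by split => //; exact: h4.
Qed.
End Lam.

Theorem mainTheorem15 (e c : nat) (S : {set 'I_e}) (n : nat) (l : seq nat) :
  4 <= e -> #|S| = c -> 2 <= c <= e - 2 ->
  is_partition l -> e %| n -> size l <= n ->
  I_separated S n l ->
  [/\ ey_regular_nat e (e - c) l <-> k_restricted (e - c) (lamIbar S n l),
      k_regular c (lamI S n l) ->
        forall y : rat, (((e - c)%N)%:Q < y)%R -> (y < ((e - c)%N)%:Q + 1)%R ->
          ey_regular e y l,
      forall y : rat, (((e - c)%N)%:Q + 1 <= y)%R -> (y <= e%:Q - 1)%R ->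
        (ey_regular e y l <-> ey_regular c (y - ((e - c)%N)%:Q)%R (lamI S n l))
    & k_restricted e l <-> k_restricted c (lamI S n l)].
Proof.
move=> he hcS hc2 pl hdiv sl sep.
have ubs := uniq_ab pl sl.
have sep' : forall p q, inI S p -> p \notin abacus n l -> ~~ inI S q -> q \in abacus n l -> q < p.
  by move=> p q h1 h2 h3 h4; apply: sep.
have e0 : 0 < e by lia.
have c0 : 0 < c by lia.
have cb0 : 0 < e - c by lia.
have Pinf1 := Pinf_I e0 (S := S) (ltac:(lia) : 0 < #|S|).
have Pinf2 := Pinf_notI (S := S) e0 (ltac:(lia) : #|S| < e).
split.
- apply: iff_trans (L_ey pl sl e (e - c)) _.
  apply: iff_trans (W1 he hcS hc2 (erefl (e - c)) sep') _.
  apply: iff_sym; exact: (T_res Pinf2 ubs cb0).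
- move=> Hreg y h1 h2; rewrite /ey_regular.
  have Hreg' := proj1 (T_reg Pinf1 ubs c0) Hreg.
  have y0 : (0 < y)%R by apply: le_lt_trans h1; rewrite ler0z.
  have k1 := rat_lt h1.
  have h2' : (y < (Posz (e - c).+1)%:~R)%R by rewrite -addn1 PoszD intrD.
  have k2 := rat_gt h2' y0.
  apply/(L_ey pl sl); apply: (W2 he hcS hc2 (erefl (e - c)) sep' Hreg' (den_gt0 y) k1).
  lia.
- move=> y h1 h2; rewrite /ey_regular.
  have h1' : ((Posz (e - c).+1)%:~R <= y)%R by rewrite -addn1 PoszD intrD.
  have h1'' : ((Posz (e - c))%:~R < y)%R.
    by apply: lt_le_trans h1'; rewrite ltr_int ltz_nat.
  have y0 : (0 < y)%R by apply: le_lt_trans h1''; rewrite ler0z.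
  have [dz dn] := rat_sub h1''.
  rewrite dz dn.
  have k1 := rat_le h1' y0.
  apply: iff_trans (L_ey pl sl _ _) _.
  have hY : (e - c + 1) * `|denq y| <= `|numq y| by lia.
  apply: iff_trans (W3 he hcS hc2 (erefl (e - c)) sep' (den_gt0 y) hY) _.
  apply: iff_sym; exact: (T_ey Pinf1 ubs).
- apply: iff_trans (L_res pl sl e0) _.
  apply: iff_sym; apply: iff_trans (T_res Pinf1 ubs c0) _.
  have W := W4 he hcS hc2 (erefl (e - c)) sep'.
  by split => H1 H2; apply: H1; apply/W.
Qed.
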